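(* Every pre-Hilbert $*$-category $\mathcal{C}$ is uniquely a $\mathbb{Q}$-linear category, that is, there is a unique way to equip each hom-set of $\mathcal{C}$ with the structure of a $\mathbb{Q}$-vector space (extending its abelian group structure) such that composition is bilinear. Additionally, $(fq)^* = f^* q$ for all morphisms $f$ and all $q\in\mathbb{Q}$.
   Context: A $*$-category is a category with a choice of $f^*\colon Y\to X$ for each $f\colon X\to Y$ such that $1^*=1$, $(gf)^*=f^*g^*$, $(f^* )^*=f$. A pre-Hilbert $*$-category is a $*$-category with (R1) a zero object, (R2) orthonormal biproducts of all pairs of objects (biproducts $(X,s_1,r_1,s_2,r_2)$ with $r_k=s_k^*$), (R3) an isometric kernel (kernel $m$ with $m^*m=1$) for every morphism, and (R4) every diagonal $\Delta\colon X\to X\oplus X$ a kernel of some morphism. Such a category is additive, hence uniquely enriched in abelian groups via its biproducts. *)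

(* Defs.v *)
From mathcomp Require Import all_boot all_order all_algebra.
Set Implicit Arguments. Unset Strict Implicit. Unset Printing Implicit Defensive.
Import GRing.Theory.
Local Open Scope ring_scope.

Record Category := {
  Ob :> Type;
  Mor : Ob -> Ob -> Type;
  comp : forall X Y Z : Ob, Mor Y Z -> Mor X Y -> Mor X Z;
  idm : forall X : Ob, Mor X X;
  comp_assoc : forall (W X Y Z : Ob) (h : Mor Y Z) (g : Mor X Y) (f : Mor W X),
      comp h (comp g f) = comp (comp h g) f;
  comp_idl : forall (X Y : Ob) (f : Mor X Y), comp (idm Y) f = f;
  comp_idr : forall (X Y : Ob) (f : Mor X Y), comp f (idm X) = f }.
Arguments comp {c X Y Z} g f.
Arguments idm {c} X.
Arguments Mor {c} X Y.

Record StarCategory := {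
  cat :> Category;
  star : forall X Y : cat, Mor X Y -> Mor Y X;
  star_id : forall X : cat, star (idm X) = idm X;
  star_comp : forall (X Y Z : cat) (g : Mor Y Z) (f : Mor X Y),
      star (comp g f) = comp (star f) (star g);
  star_invol : forall (X Y : cat) (f : Mor X Y), star (star f) = f }.
Arguments star {s X Y} f.

Section Defs.
Variable C : Category.

Definition is_zero_obj (Z : C) : Prop :=
  forall X : C, (exists f : Mor X Z, forall g, g = f) /\
                (exists f : Mor Z X, forall g, g = f).

Definition is_zero_mor (X Y : C) (f : Mor X Y) : Prop :=
  exists (Z : C) (a : Mor X Z) (b : Mor Z Y), is_zero_obj Z /\ f = comp b a.

Definition is_biproduct (X1 X2 B : C) (s1 : Mor X1 B) (r1 : Mor B X1)
    (s2 : Mor X2 B) (r2 : Mor B X2) : Prop :=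
  [/\ comp r1 s1 = idm X1 /\ comp r2 s2 = idm X2,
      is_zero_mor (comp r2 s1) /\ is_zero_mor (comp r1 s2),
      (forall (W : C) (f1 : Mor W X1) (f2 : Mor W X2),
          exists! h : Mor W B, comp r1 h = f1 /\ comp r2 h = f2) &
      (forall (W : C) (g1 : Mor X1 W) (g2 : Mor X2 W),
          exists! h : Mor B W, comp h s1 = g1 /\ comp h s2 = g2)].

Definition is_kernel (X Y K : C) (f : Mor X Y) (m : Mor K X) : Prop :=
  is_zero_mor (comp f m) /\
  forall (W : C) (g : Mor W X), is_zero_mor (comp f g) ->
    exists! h : Mor W K, comp m h = g.

(* the abelian-group addition on hom-sets induced by biproducts:
   h = f + g  iff  h = [1,1] o <f,g> for some biproduct Y (+) Y *)
Definition hom_sum (X Y : C) (f g h : Mor X Y) : Prop :=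
  exists (B : C) (s1 r1 s2 r2 : Mor _ _) (p : Mor X B) (c : Mor B Y),
    @is_biproduct Y Y B s1 r1 s2 r2 /\
    comp r1 p = f /\ comp r2 p = g /\
    comp c s1 = idm Y /\ comp c s2 = idm Y /\ h = comp c p.

Definition QAction := forall X Y : C, rat -> Mor X Y -> Mor X Y.

Definition is_Qlinear (sc : QAction) : Prop :=
  [/\ (forall (X Y : C) (f : Mor X Y), sc X Y 1 f = f) /\
      (forall (X Y : C) (a b : rat) (f : Mor X Y),
          sc X Y (a * b) f = sc X Y a (sc X Y b f)),
      (forall (X Y : C) (a b : rat) (f : Mor X Y),
          hom_sum (sc X Y a f) (sc X Y b f) (sc X Y (a + b) f)),
      (forall (X Y : C) (a : rat) (f g h : Mor X Y),
          hom_sum f g h -> hom_sum (sc X Y a f) (sc X Y a g) (sc X Y a h)),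
      (forall (X Y Z : C) (g : Mor Y Z) (f f' h : Mor X Y),
          hom_sum f f' h -> hom_sum (comp g f) (comp g f') (comp g h)) /\
      (forall (X Y Z : C) (g g' h : Mor Y Z) (f : Mor X Y),
          hom_sum g g' h -> hom_sum (comp g f) (comp g' f) (comp h f)) &
      (forall (X Y Z : C) (a : rat) (g : Mor Y Z) (f : Mor X Y),
          sc X Z a (comp g f) = comp (sc Y Z a g) f /\
          sc X Z a (comp g f) = comp g (sc X Y a f))].

End Defs.

Definition is_preHilbert (C : StarCategory) : Prop :=
  [/\ (exists Z : C, is_zero_obj Z),
      (forall X Y : C, exists (B : C) (s1 : Mor X B) (s2 : Mor Y B),
          is_biproduct s1 (star s1) s2 (star s2)),
      (forall (X Y : C) (f : Mor X Y), exists (K : C) (m : Mor K X),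
          is_kernel f m /\ comp (star m) m = idm K) &
      (forall (X B : C) (s1 s2 : Mor X B),
          is_biproduct s1 (star s1) s2 (star s2) ->
          forall d : Mor X B, comp (star s1) d = idm X -> comp (star s2) d = idm X ->
          exists (Y : C) (f : Mor B Y), is_kernel f d)].

(* Main.v *)
Require Import Defs.
From mathcomp Require Import ssreflect ssrfun ssrbool rat.
From HB Require Import structures.
From mathcomp Require Import all_boot all_order all_algebra.
From mathcomp Require Import boolp.
Set Implicit Arguments. Unset Strict Implicit. Unset Printing Implicit Defensive.
Import GRing.Theory.

Section Main.
Variable C : StarCategory.
Hypothesis HC : is_preHilbert C.

Local Notation "g ⊙ f" := (Defs.comp g f) (at level 40, left associativity).

Lemma R1 : exists Z : C, is_zero_obj Z. Proof. by case: HC. Qed.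
Definition Z0 : C := proj1_sig (cid R1).
Lemma Z0P : is_zero_obj Z0. Proof. exact: proj2_sig (cid R1). Qed.
Definition tZ (X : C) : Mor X Z0 := proj1_sig (cid (proj1 (Z0P X))).
Definition uZ (X : C) : Mor Z0 X := proj1_sig (cid (proj2 (Z0P X))).
Lemma tZ_uniq X (f : Mor X Z0) : f = tZ X.
Proof. exact: (proj2_sig (cid (proj1 (Z0P X)))). Qed.
Lemma uZ_uniq X (f : Mor Z0 X) : f = uZ X.
Proof. exact: (proj2_sig (cid (proj2 (Z0P X)))). Qed.

Definition zm (X Y : C) : Mor X Y := uZ Y ⊙ tZ X.

Lemma zm_through X Y (a : Mor X Z0) (b : Mor Z0 Y) : b ⊙ a = zm X Y.
Proof. by rewrite (tZ_uniq a) (uZ_uniq b). Qed.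

Lemma zero_morP X Y (f : Mor X Y) : is_zero_mor f <-> f = zm X Y.
Proof.
split.
- move=> [Z [a [b [HZ ->]]]].
  have [[i Hi] _] := HZ Z0. have [_ [j Hj]] := HZ Z0.
  have -> : a = (uZ Z) ⊙ tZ X.
    case: (HZ X) => [[a0 Ha0] _]. by rewrite (Ha0 a) (Ha0 (uZ Z ⊙ tZ X)).
  have -> : b = uZ Y ⊙ tZ Z.
    case: (HZ Y) => [_ [b0 Hb0]]. by rewrite (Hb0 b) (Hb0 (uZ Y ⊙ tZ Z)).
  by rewrite -Defs.comp_assoc zm_through.
- move=> ->. exists Z0, (tZ X), (uZ Y). split => //. exact: Z0P.
Qed.

Lemma zm_compl X Y Z (f : Mor X Y) : zm Y Z ⊙ f = zm X Z.
Proof. by rewrite /zm -Defs.comp_assoc zm_through. Qed.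
Lemma zm_compr X Y Z (f : Mor Y Z) : f ⊙ zm X Y = zm X Z.
Proof. by rewrite /zm Defs.comp_assoc zm_through. Qed.
Lemma star_zm X Y : star (zm X Y) = zm Y X.
Proof. by rewrite /zm star_comp zm_through. Qed.

Section Bip.
Variables (X1 X2 B : C) (s1 : Mor X1 B) (r1 : Mor B X1) (s2 : Mor X2 B) (r2 : Mor B X2).
Hypothesis HB : is_biproduct s1 r1 s2 r2.

Lemma bp_r1s1 : r1 ⊙ s1 = idm X1. Proof. by case: HB => [[]]. Qed.
Lemma bp_r2s2 : r2 ⊙ s2 = idm X2. Proof. by case: HB => [[]]. Qed.
Lemma bp_r2s1 : r2 ⊙ s1 = zm _ _. Proof. by case: HB => _ [/zero_morP]. Qed.
Lemma bp_r1s2 : r1 ⊙ s2 = zm _ _. Proof. by case: HB => _ [_ /zero_morP]. Qed.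
Lemma bp_mono W (h h' : Mor W B) : r1 ⊙ h = r1 ⊙ h' -> r2 ⊙ h = r2 ⊙ h' -> h = h'.
Proof.
case: HB => _ _ Hp _ e1 e2. have [h0 [_ U]] := Hp W (r1 ⊙ h) (r2 ⊙ h).
by rewrite -(U h) // -(U h') // e1 e2.
Qed.
Lemma bp_epi W (h h' : Mor B W) : h ⊙ s1 = h' ⊙ s1 -> h ⊙ s2 = h' ⊙ s2 -> h = h'.
Proof.
case: HB => _ _ _ Hp e1 e2. have [h0 [_ U]] := Hp W (h ⊙ s1) (h ⊙ s2).
by rewrite -(U h) // -(U h') // e1 e2.
Qed.
Lemma bp_pair W (f1 : Mor W X1) (f2 : Mor W X2) : exists h, r1 ⊙ h = f1 /\ r2 ⊙ h = f2.
Proof. case: HB => _ _ Hp _. by have [h [H _]] := Hp W f1 f2; exists h. Qed.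
Lemma bp_copair W (f1 : Mor X1 W) (f2 : Mor X2 W) : exists h, h ⊙ s1 = f1 /\ h ⊙ s2 = f2.
Proof. case: HB => _ _ _ Hp. by have [h [H _]] := Hp W f1 f2; exists h. Qed.
End Bip.

Lemma sum_indep (X Y B B' : C) (s1 r1 s2 r2 : Mor _ _) (s1' r1' s2' r2' : Mor _ _)
  (p : Mor X B) (c : Mor B Y) (p' : Mor X B') (c' : Mor B' Y) :
  @is_biproduct C Y Y B s1 r1 s2 r2 -> @is_biproduct C Y Y B' s1' r1' s2' r2' ->
  r1 ⊙ p = r1' ⊙ p' -> r2 ⊙ p = r2' ⊙ p' ->
  c ⊙ s1 = idm Y -> c ⊙ s2 = idm Y -> c' ⊙ s1' = idm Y -> c' ⊙ s2' = idm Y ->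
  c ⊙ p = c' ⊙ p'.
Proof.
move=> HB HB' e1 e2 c1 c2 c1' c2'.
have [phi [f1 f2]] := bp_pair HB' r1 r2.
have ps1 : phi ⊙ s1 = s1'.
  apply: (bp_mono HB'); rewrite Defs.comp_assoc ?f1 ?f2.
    by rewrite (bp_r1s1 HB) (bp_r1s1 HB').
  by rewrite (bp_r2s1 HB) (bp_r2s1 HB').
have ps2 : phi ⊙ s2 = s2'.
  apply: (bp_mono HB'); rewrite Defs.comp_assoc ?f1 ?f2.
    by rewrite (bp_r1s2 HB) (bp_r1s2 HB').
  by rewrite (bp_r2s2 HB) (bp_r2s2 HB').
have pp : phi ⊙ p = p'.
  by apply: (bp_mono HB'); rewrite Defs.comp_assoc ?f1 ?f2.
have cc : c' ⊙ phi = c.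
  by apply: (bp_epi HB); rewrite -Defs.comp_assoc ?ps1 ?ps2 ?c1 ?c2.
by rewrite -cc -Defs.comp_assoc pp.
Qed.


Lemma R2 X Y : exists (B : C) (s1 : Mor X B) (s2 : Mor Y B),
  is_biproduct s1 (star s1) s2 (star s2).
Proof. by case: HC. Qed.
Definition bB X Y : C := proj1_sig (cid (R2 X Y)).
Definition bs1 X Y : Mor X (bB X Y) := proj1_sig (cid (proj2_sig (cid (R2 X Y)))).
Definition bs2 X Y : Mor Y (bB X Y) :=
  proj1_sig (cid (proj2_sig (cid (proj2_sig (cid (R2 X Y)))))).
Lemma bP X Y : is_biproduct (bs1 X Y) (star (bs1 X Y)) (bs2 X Y) (star (bs2 X Y)).
Proof. exact: (proj2_sig (cid (proj2_sig (cid (proj2_sig (cid (R2 X Y))))))). Qed.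

Definition bpair X Y W (f : Mor W X) (g : Mor W Y) : Mor W (bB X Y) :=
  proj1_sig (cid (bp_pair (bP X Y) f g)).
Lemma bpair1 X Y W (f : Mor W X) (g : Mor W Y) : star (bs1 X Y) ⊙ bpair f g = f.
Proof. exact: (proj1 (proj2_sig (cid (bp_pair (bP X Y) f g)))). Qed.
Lemma bpair2 X Y W (f : Mor W X) (g : Mor W Y) : star (bs2 X Y) ⊙ bpair f g = g.
Proof. exact: (proj2 (proj2_sig (cid (bp_pair (bP X Y) f g)))). Qed.
Definition bcopair X Y W (f : Mor X W) (g : Mor Y W) : Mor (bB X Y) W :=
  proj1_sig (cid (bp_copair (bP X Y) f g)).
Lemma bcopair1 X Y W (f : Mor X W) (g : Mor Y W) : bcopair f g ⊙ bs1 X Y = f.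
Proof. exact: (proj1 (proj2_sig (cid (bp_copair (bP X Y) f g)))). Qed.
Lemma bcopair2 X Y W (f : Mor X W) (g : Mor Y W) : bcopair f g ⊙ bs2 X Y = g.
Proof. exact: (proj2 (proj2_sig (cid (bp_copair (bP X Y) f g)))). Qed.

Definition cd Y : Mor (bB Y Y) Y := bcopair (idm Y) (idm Y).
Definition add X Y (f g : Mor X Y) : Mor X Y := cd Y ⊙ bpair f g.

Lemma hom_sumE X Y (f g h : Mor X Y) : hom_sum f g h <-> h = add f g.
Proof.
split.
- move=> [B [s1 [r1 [s2 [r2 [p [c [HB [e1 [e2 [c1 [c2 ->]]]]]]]]]]]].
  apply: (sum_indep HB (bP Y Y)) => //.
  + by rewrite e1 bpair1.
  + by rewrite e2 bpair2.
  + exact: bcopair1.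
  + exact: bcopair2.
- move=> ->. exists (bB Y Y), (bs1 Y Y), (star (bs1 Y Y)), (bs2 Y Y), (star (bs2 Y Y)),
    (bpair f g), (cd Y).
  split; first exact: bP.
  by rewrite bpair1 bpair2 /cd bcopair1 bcopair2.
Qed.

Lemma pair_0r X Y W (f : Mor W X) : bpair f (zm W Y) = bs1 X Y ⊙ f.
Proof.
apply: (bp_mono (bP X Y)); rewrite ?bpair1 ?bpair2 Defs.comp_assoc.
  by rewrite (bp_r1s1 (bP X Y)) comp_idl.
by rewrite (bp_r2s1 (bP X Y)) zm_compl.
Qed.
Lemma pair_0l X Y W (f : Mor W Y) : bpair (zm W X) f = bs2 X Y ⊙ f.
Proof.
apply: (bp_mono (bP X Y)); rewrite ?bpair1 ?bpair2 Defs.comp_assoc.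
  by rewrite (bp_r1s2 (bP X Y)) zm_compl.
by rewrite (bp_r2s2 (bP X Y)) comp_idl.
Qed.

Lemma add0m X Y (f : Mor X Y) : add (zm X Y) f = f.
Proof. by rewrite /add pair_0l Defs.comp_assoc /cd bcopair2 comp_idl. Qed.
Lemma addm0 X Y (f : Mor X Y) : add f (zm X Y) = f.
Proof. by rewrite /add pair_0r Defs.comp_assoc /cd bcopair1 comp_idl. Qed.

Lemma pair_comp X Y W V (f : Mor W X) (g : Mor W Y) (k : Mor V W) :
  bpair f g ⊙ k = bpair (f ⊙ k) (g ⊙ k).
Proof.
by apply: (bp_mono (bP X Y)); rewrite Defs.comp_assoc ?bpair1 ?bpair2.
Qed.

Lemma add_compl X Y W (f g : Mor X Y) (k : Mor W X) :
  add f g ⊙ k = add (f ⊙ k) (g ⊙ k).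
Proof. by rewrite /add -Defs.comp_assoc pair_comp. Qed.

Lemma add_compr X Y W (f g : Mor X Y) (k : Mor Y W) :
  k ⊙ add f g = add (k ⊙ f) (k ⊙ g).
Proof.
pose M := bpair (k ⊙ star (bs1 Y Y)) (k ⊙ star (bs2 Y Y)).
have e1 : M ⊙ bpair f g = bpair (k ⊙ f) (k ⊙ g).
  by rewrite /M pair_comp -!Defs.comp_assoc bpair1 bpair2.
have e2 : cd W ⊙ M = k ⊙ cd Y.
  apply: (bp_epi (bP Y Y)); rewrite -!Defs.comp_assoc /M pair_comp
    -!Defs.comp_assoc /cd ?bcopair1 ?bcopair2 comp_idr.
    by rewrite (bp_r1s1 (bP Y Y)) (bp_r2s1 (bP Y Y)) zm_compr comp_idr pair_0r
      Defs.comp_assoc bcopair1 comp_idl.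
  by rewrite (bp_r2s2 (bP Y Y)) (bp_r1s2 (bP Y Y)) zm_compr comp_idr pair_0l
      Defs.comp_assoc bcopair2 comp_idl.
by rewrite /add Defs.comp_assoc -e2 -Defs.comp_assoc e1.
Qed.

Lemma bp_id (X1 X2 B : C) (s1 : Mor X1 B) (r1 : Mor B X1) (s2 : Mor X2 B) (r2 : Mor B X2) :
  is_biproduct s1 r1 s2 r2 -> add (s1 ⊙ r1) (s2 ⊙ r2) = idm B.
Proof.
move=> HB; apply: (bp_mono HB); rewrite comp_idr add_compr !Defs.comp_assoc.
  by rewrite (bp_r1s1 HB) (bp_r1s2 HB) comp_idl zm_compl addm0.
by rewrite (bp_r2s1 HB) (bp_r2s2 HB) comp_idl zm_compl add0m.
Qed.

Lemma medial X Y (a b c d : Mor X Y) :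
  add (add a b) (add c d) = add (add a c) (add b d).
Proof.
rewrite {2 3 4}/add -add_compr; congr (_ ⊙ _).
apply: (bp_mono (bP Y Y)); by rewrite add_compr ?bpair1 ?bpair2.
Qed.

Lemma addmA X Y (a b c : Mor X Y) : add a (add b c) = add (add a b) c.
Proof.
by rewrite -{1}(addm0 a) medial add0m.
Qed.
Lemma addmC X Y (a b : Mor X Y) : add a b = add b a.
Proof.
by rewrite -{1}(add0m a) -{1}(addm0 b) medial add0m addm0.
Qed.

Lemma star_add X Y (f g : Mor X Y) : star (add f g) = add (star f) (star g).
Proof.
have hD : star (cd Y) = bpair (idm Y) (idm Y).
  apply: (bp_mono (bP Y Y)); rewrite ?bpair1 ?bpair2 -star_comp /cd.
    by rewrite bcopair1 star_id.
  by rewrite bcopair2 star_id.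
have h1 : star (bpair f g) ⊙ bs1 Y Y = star f.
  by rewrite -[in RHS](bpair1 f g) star_comp star_invol.
have h2 : star (bpair f g) ⊙ bs2 Y Y = star g.
  by rewrite -[in RHS](bpair2 f g) star_comp star_invol.
rewrite {1}/add star_comp hD -[bpair (idm Y) (idm Y)]comp_idl -(bp_id (bP Y Y)).
rewrite add_compl add_compr -!Defs.comp_assoc bpair1 bpair2 !comp_idr.
by rewrite ?Defs.comp_assoc h1 h2.
Qed.


Lemma R3 X Y (f : Mor X Y) : exists (K : C) (m : Mor K X),
  is_kernel f m /\ star m ⊙ m = idm K.
Proof. by case: HC. Qed.

Lemma ker_fact X Y K (f : Mor X Y) (m : Mor K X) W (g : Mor W X) :
  is_kernel f m -> f ⊙ g = zm W Y -> exists h, g = m ⊙ h.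
Proof.
case=> _ H e. have [h [<- _]] := H W g (proj2 (zero_morP _) e). by exists h.
Qed.
Lemma ker_zero X Y K (f : Mor X Y) (m : Mor K X) :
  is_kernel f m -> f ⊙ m = zm K Y.
Proof. by case=> /zero_morP. Qed.

Lemma ker_dual X B Y K (d : Mor X B) (f : Mor B Y) (m : Mor K B) :
  f ⊙ d = zm X Y ->
  (forall W (h : Mor W B), f ⊙ h = zm W Y -> exists k, h = d ⊙ k) ->
  is_kernel (star d) m ->
  forall W (h : Mor W B), star m ⊙ h = zm W K -> exists k, h = d ⊙ k.
Proof.
move=> fd Hd Hm W h e.
have [t ht] : exists t, star f = m ⊙ t.
  apply: (ker_fact Hm). by rewrite -star_comp fd star_zm.
apply: Hd. by rewrite -[f]star_invol ht star_comp -Defs.comp_assoc e zm_compr.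
Qed.

Lemma inv_uniq X Y (x y z : Mor X Y) : add x y = zm X Y -> add x z = zm X Y -> y = z.
Proof.
move=> e1 e2. by rewrite -(addm0 y) -e2 addmA (addmC y) e1 add0m.
Qed.

Lemma expand X Y W (h : Mor W (bB X Y)) :
  h = add (bs1 X Y ⊙ (star (bs1 X Y) ⊙ h)) (bs2 X Y ⊙ (star (bs2 X Y) ⊙ h)).
Proof. by rewrite !Defs.comp_assoc -add_compl (bp_id (bP X Y)) comp_idl. Qed.

Lemma star_s1 X Y W (h : Mor W (bB X Y)) : star h ⊙ bs1 X Y = star (star (bs1 X Y) ⊙ h).
Proof. by rewrite star_comp star_invol. Qed.
Lemma star_s2 X Y W (h : Mor W (bB X Y)) : star h ⊙ bs2 X Y = star (star (bs2 X Y) ⊙ h).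
Proof. by rewrite star_comp star_invol. Qed.

Lemma inner X Y W V (h : Mor W (bB X Y)) (h' : Mor V (bB X Y)) :
  star h ⊙ h' = add (star (star (bs1 X Y) ⊙ h) ⊙ (star (bs1 X Y) ⊙ h'))
                    (star (star (bs2 X Y) ⊙ h) ⊙ (star (bs2 X Y) ⊙ h')).
Proof. by rewrite {1}(expand h') add_compr !Defs.comp_assoc star_s1 star_s2. Qed.

Lemma R4 X (d : Mor X (bB X X)) : star (bs1 X X) ⊙ d = idm X -> star (bs2 X X) ⊙ d = idm X ->
  exists (Y : C) (f : Mor (bB X X) Y), is_kernel f d.
Proof. case: HC => _ _ _ H. exact: H (bP X X) d. Qed.

Lemma neg_exists X : exists n : Mor X X, add (idm X) n = zm X X.
Proof.
pose D := bpair (idm X) (idm X).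
have [Y [g Hg]] := R4 (bpair1 _ _ : star (bs1 X X) ⊙ D = idm X) (bpair2 _ _).
have [K [m [Hm iso]]] := R3 (star D).
pose p := star (bs1 X X) ⊙ m. pose q := star (bs2 X X) ⊙ m.
have Ds1 : star D ⊙ bs1 X X = idm X by rewrite star_s1 bpair1 star_id.
have Ds2 : star D ⊙ bs2 X X = idm X by rewrite star_s2 bpair2 star_id.
have pq : add p q = zm K X.
  rewrite -(ker_zero Hm) [in RHS](expand m) add_compr !Defs.comp_assoc Ds1 Ds2.
  by rewrite !comp_idl.
have pp : add (star p ⊙ p) (star q ⊙ q) = idm K.
  by rewrite -iso inner.
have e1 : add (star p ⊙ p) (star p ⊙ q) = zm K K.
  by rewrite -add_compr pq zm_compr.
have e2 : add (star p ⊙ p) (star q ⊙ p) = zm K K.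
  by rewrite -add_compl -star_add pq star_zm zm_compl.
have e3 : add (star q ⊙ p) (star q ⊙ q) = zm K K.
  by rewrite -add_compr pq zm_compr.
have e4 : star p ⊙ p = star q ⊙ q.
  apply: (inv_uniq (x := star q ⊙ p)) => //. by rewrite addmC.
have two : add (star p ⊙ p) (star p ⊙ p) = idm K by rewrite {2}e4.
pose e := add p p ⊙ star p.
have he : star p ⊙ e = star p.
  by rewrite /e Defs.comp_assoc add_compr two comp_idl.
have eE : e = add p p ⊙ star p by [].
clearbody e.
have [k hk] : exists k, bpair e (idm X) = D ⊙ k.
  apply: (ker_dual (f := g) (d := D) _ _ Hm).
  - exact: ker_zero Hg.
  - move=> W h /(ker_fact Hg) [k ->]. by exists k.
  rewrite (expand (bpair e (idm X))) add_compr bpair1 bpair2 !Defs.comp_assoc.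
  by rewrite star_s1 star_s2 -/p -/q he comp_idr -star_add pq star_zm.
have ee : e = idm X.
  have := f_equal (fun h => star (bs1 X X) ⊙ h) hk.
  have := f_equal (fun h => star (bs2 X X) ⊙ h) hk.
  rewrite /= !Defs.comp_assoc bpair1 bpair2 /D bpair1 bpair2 !comp_idl.
  by move=> <- .
exists (add q q ⊙ star p).
by rewrite -ee eE -add_compl medial pq addm0 zm_compl.
Qed.

Definition NX X : Mor X X := proj1_sig (cid (neg_exists X)).
Lemma NXP X : add (idm X) (NX X) = zm X X.
Proof. exact: (proj2_sig (cid (neg_exists X))). Qed.

Fact neg_key : unit. Proof. exact: tt. Qed.
Definition neg X Y (f : Mor X Y) : Mor X Y := locked_with neg_key (f ⊙ NX X).
Lemma addNm X Y (f : Mor X Y) : add (neg f) f = zm X Y.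
Proof. by rewrite addmC /neg unlock -{1}(comp_idr f) -add_compr NXP zm_compr. Qed.

HB.instance Definition _ (X Y : C) := gen_eqMixin (Mor X Y).
HB.instance Definition _ (X Y : C) := gen_choiceMixin (Mor X Y).
Fact add_key : unit. Proof. exact: tt. Qed.
Definition addl X Y (f g : Mor X Y) : Mor X Y := locked_with add_key (add f g).
Lemma addlE X Y (f g : Mor X Y) : addl f g = add f g.
Proof. by rewrite /addl unlock. Qed.
Fact zero_key : unit. Proof. exact: tt. Qed.
Definition zml X Y : Mor X Y := locked_with zero_key (zm X Y).
Lemma zmlE X Y : zml X Y = zm X Y.
Proof. by rewrite /zml unlock. Qed.
Lemma addlA X Y : associative (@addl X Y).
Proof. by move=> *; rewrite !addlE addmA. Qed.
Lemma addlC X Y : commutative (@addl X Y).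
Proof. by move=> *; rewrite !addlE addmC. Qed.
Lemma add0l X Y : left_id (zml X Y) (@addl X Y).
Proof. by move=> *; rewrite !addlE zmlE add0m. Qed.
Lemma addNl X Y : left_inverse (zml X Y) (@neg X Y) (@addl X Y).
Proof. by move=> *; rewrite !addlE zmlE addNm. Qed.
HB.instance Definition _ (X Y : C) :=
  GRing.isZmodule.Build (Mor X Y) (@addlA X Y) (@addlC X Y) (@add0l X Y) (@addNl X Y).

Local Open Scope ring_scope.

Lemma comp_addl X Y W (f g : Mor X Y) (k : Mor W X) : (f + g) ⊙ k = f ⊙ k + g ⊙ k.
Proof. by rewrite /GRing.add /= !addlE add_compl. Qed.
Lemma comp_addr X Y W (f g : Mor X Y) (k : Mor Y W) : k ⊙ (f + g) = k ⊙ f + k ⊙ g.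
Proof. by rewrite /GRing.add /= !addlE add_compr. Qed.
Lemma comp0l X Y W (k : Mor W X) : (0 : Mor X Y) ⊙ k = 0.
Proof. by rewrite /GRing.zero /= !zmlE zm_compl. Qed.
Lemma comp0r X Y W (k : Mor Y W) : k ⊙ (0 : Mor X Y) = 0.
Proof. by rewrite /GRing.zero /= !zmlE zm_compr. Qed.
Lemma star_addE X Y (f g : Mor X Y) : star (f + g) = star f + star g.
Proof. by rewrite /GRing.add /= !addlE star_add. Qed.
Lemma star0 X Y : star (0 : Mor X Y) = 0.
Proof. by rewrite /GRing.zero /= !zmlE star_zm. Qed.

Lemma morph_mulrz (U V : zmodType) (phi : U -> V) :
  (forall a b, phi (a + b) = phi a + phi b) -> forall x z, phi (x *~ z) = phi x *~ z.
Proof.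
move=> H.
have p0 : phi 0 = 0.
  by apply/eqP; rewrite -(addrI (phi 0) (_ : phi 0 + phi 0 = phi 0 + 0)) // addr0 -H addr0.
have pN : forall x, phi (- x) = - phi x.
  move=> x; apply/eqP; rewrite -addr_eq0 -H addNr p0 //.
have pn : forall x n, phi (x *+ n) = phi x *+ n.
  move=> x; elim=> [|n IH]; first by rewrite !mulr0n p0.
  by rewrite !mulrS H IH.
move=> x [n|n]; first by rewrite -!pmulrn pn.
by rewrite !NegzE !mulrNz pN -!pmulrn pn.
Qed.

Lemma comp_mulrzl X Y W (f : Mor X Y) (k : Mor W X) z : (f *~ z) ⊙ k = (f ⊙ k) *~ z.
Proof. apply: (morph_mulrz (phi := fun f : Mor X Y => f ⊙ k)) => a b; exact: comp_addl. Qed.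
Lemma comp_mulrzr X Y W (f : Mor X Y) (k : Mor Y W) z : k ⊙ (f *~ z) = (k ⊙ f) *~ z.
Proof. apply: (morph_mulrz (phi := fun f : Mor X Y => k ⊙ f)) => a b; exact: comp_addr. Qed.
Lemma star_mulrz X Y (f : Mor X Y) z : star (f *~ z) = star f *~ z.
Proof. apply: (morph_mulrz (phi := fun f : Mor X Y => star f)) => a b; exact: star_addE. Qed.
Lemma comp_oppl X Y W (f : Mor X Y) (k : Mor W X) : (- f) ⊙ k = - (f ⊙ k).
Proof. by rewrite -mulrN1z comp_mulrzl mulrN1z. Qed.
Lemma comp_oppr X Y W (f : Mor X Y) (k : Mor Y W) : k ⊙ (- f) = - (k ⊙ f).
Proof. by rewrite -mulrN1z comp_mulrzr mulrN1z. Qed.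
Lemma star_opp X Y (f : Mor X Y) : star (- f) = - star f.
Proof. by rewrite -mulrN1z star_mulrz mulrN1z. Qed.

Lemma zmE X Y : zm X Y = 0.
Proof. by rewrite /GRing.zero /= zmlE. Qed.

Lemma ker_dualR X B Y K (d : Mor X B) (f : Mor B Y) (m : Mor K B) :
  f ⊙ d = 0 ->
  (forall W (h : Mor W B), f ⊙ h = 0 -> exists k, h = d ⊙ k) ->
  is_kernel (star d) m ->
  forall W (h : Mor W B), star m ⊙ h = 0 -> exists k, h = d ⊙ k.
Proof.
move=> fd Hd Hm W h e; apply: (ker_dual (f := f) _ _ Hm); rewrite ?zmE // => W0 h0; rewrite zmE; exact: Hd.
Qed.

Lemma expandR X Y W (h : Mor W (bB X Y)) :
  h = bs1 X Y ⊙ (star (bs1 X Y) ⊙ h) + bs2 X Y ⊙ (star (bs2 X Y) ⊙ h).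
Proof. by rewrite /GRing.add /= addlE -expand. Qed.
Lemma innerR X Y W V (h : Mor W (bB X Y)) (h' : Mor V (bB X Y)) :
  star h ⊙ h' = star (star (bs1 X Y) ⊙ h) ⊙ (star (bs1 X Y) ⊙ h')
                + star (star (bs2 X Y) ⊙ h) ⊙ (star (bs2 X Y) ⊙ h').
Proof. by rewrite /GRing.add /= addlE -inner. Qed.

Lemma inv_graph X Z (a : Mor X Z) : exists w : Mor Z Z,
  (idm Z + a ⊙ star a) ⊙ w = idm Z /\ w ⊙ (idm Z + a ⊙ star a) = idm Z.
Proof.
pose g := bpair (idm X) a. pose f := bcopair a (- idm Z).
have fg : f ⊙ g = 0.
  rewrite {1}(expandR g) comp_addr !Defs.comp_assoc bcopair1 bcopair2 -!Defs.comp_assoc /g bpair1 bpair2.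
  by rewrite comp_idr comp_oppl comp_idl subrr.
have Hd : forall W (h : Mor W (bB X Z)), f ⊙ h = 0 -> exists k, h = g ⊙ k.
  move=> W h fh; exists (star (bs1 X Z) ⊙ h).
  rewrite {1}(expandR h) comp_addr !Defs.comp_assoc bcopair1 bcopair2 comp_oppl comp_idl comp_oppl in fh.
  have fh' := subr0_eq fh.
  apply: (bp_mono (bP X Z)); rewrite Defs.comp_assoc ?bpair1 ?bpair2 ?comp_idl //.
  by rewrite Defs.comp_assoc fh'.
have [K [m [Hm iso]]] := R3 (star g).
pose p := star (bs1 X Z) ⊙ m. pose q := star (bs2 X Z) ⊙ m.
have gm : p = - (star a ⊙ q).
  apply/eqP; rewrite -addr_eq0; apply/eqP.
  have := ker_zero Hm; rewrite innerR -/p -/q bpair1 bpair2 star_id comp_idl.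
  by rewrite zmE => ->.
have qq : star q ⊙ (idm Z + a ⊙ star a) ⊙ q = idm K.
  rewrite -iso innerR -/p -/q gm star_opp comp_oppl comp_oppr opprK star_comp star_invol.
  by rewrite comp_addr comp_addl comp_idr !Defs.comp_assoc addrC.
pose T := idm Z + a ⊙ star a.
have TT : star T = T by rewrite /T star_addE star_id star_comp star_invol.
pose e := T ⊙ (q ⊙ star q).
have he : star q ⊙ e = star q.
  by rewrite /e /T Defs.comp_assoc [_ ⊙ (q ⊙ _)]Defs.comp_assoc qq comp_idl.
have eE : e = T ⊙ (q ⊙ star q) by [].
clearbody e.
have [k hk] : exists k, bs2 X Z ⊙ (e - idm Z) = g ⊙ k.
  apply: (ker_dualR (f := f) (d := g) fg _ Hm); first by move=> W h /Hd.
  rewrite innerR -/p -/q (Defs.comp_assoc (star (bs1 X Z))) (Defs.comp_assoc (star (bs2 X Z))) (bp_r1s2 (bP X Z)) (bp_r2s2 (bP X Z)) zmE.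
  by rewrite !comp_idl comp0l comp0r add0r comp_addr comp_oppr comp_idr he subrr.
have k0 : k = 0.
  have := f_equal (fun h => star (bs1 X Z) ⊙ h) hk.
  by rewrite /= !Defs.comp_assoc (bp_r1s2 (bP X Z)) bpair1 comp_idl zmE comp0l => ->.
have ee : e = idm Z.
  have := f_equal (fun h => star (bs2 X Z) ⊙ h) hk.
  rewrite /= !Defs.comp_assoc (bp_r2s2 (bP X Z)) bpair2 comp_idl k0 comp0r.
  by move/subr0_eq.
exists (q ⊙ star q); split; first by rewrite -eE.
have sw : star (q ⊙ star q) = q ⊙ star q by rewrite star_comp star_invol.
have : star (T ⊙ (q ⊙ star q)) = star (idm Z) by rewrite -eE ee.
by rewrite star_comp sw TT star_id.
Qed.


Lemma sq_exists n X : exists (Z : C) (a : Mor X Z), star a ⊙ a = idm X *+ n.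
Proof.
elim: n X => [|n IH] X.
  by exists X, 0; rewrite comp0r mulr0n.
have [Z [a ha]] := IH X.
exists (bB Z X), (bpair a (idm X)).
by rewrite innerR !bpair1 !bpair2 star_id comp_idl ha mulrS addrC.
Qed.

Lemma nat_inv n X : exists w : Mor X X,
  (idm X *+ n.+1) ⊙ w = idm X /\ w ⊙ (idm X *+ n.+1) = idm X.
Proof.
have [Z [a ha]] := sq_exists n X.
have [w hw] := inv_graph (star a).
by exists w; rewrite mulrS -ha; move: hw; rewrite star_invol.
Qed.

Lemma int_inv X (d : int) : (0 < d)%R -> exists w : Mor X X,
  (idm X *~ d) ⊙ w = idm X /\ w ⊙ (idm X *~ d) = idm X.
Proof. case: d => [[|n]|n] // _. rewrite -pmulrn. exact: nat_inv. Qed.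

Lemma mulrz_compr X Y (f : Mor X Y) z : f *~ z = f ⊙ (idm X *~ z).
Proof. by rewrite comp_mulrzr comp_idr. Qed.
Lemma mulrz_compl X Y (f : Mor X Y) z : f *~ z = (idm Y *~ z) ⊙ f.
Proof. by rewrite comp_mulrzl comp_idl. Qed.

Lemma mulrz_inj X Y (g g' : Mor X Y) d : (0 < d)%R -> g *~ d = g' *~ d -> g = g'.
Proof.
move=> d0 e; have [w [h1 _]] := int_inv X d0.
by rewrite -(comp_idr g) -(comp_idr g') -h1 !Defs.comp_assoc -!mulrz_compr e.
Qed.

Definition Dinv X (q : rat) : Mor X X := proj1_sig (cid (int_inv X (denq_gt0 q))).
Lemma DinvP X q : (idm X *~ denq q) ⊙ Dinv X q = idm X /\ Dinv X q ⊙ (idm X *~ denq q) = idm X.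
Proof. exact: (proj2_sig (cid (int_inv X (denq_gt0 q)))). Qed.

Definition sc : QAction C := fun X Y q f => (f *~ numq q) ⊙ Dinv X q.

Lemma sc_den X Y q (f : Mor X Y) : sc q f *~ denq q = f *~ numq q.
Proof. by rewrite mulrz_compr /sc -Defs.comp_assoc (proj2 (DinvP X q)) comp_idr. Qed.

Lemma sc_char X Y (f g : Mor X Y) q (d z : int) :
  (0 < d)%R -> q * d%:~R = z%:~R -> g *~ d = f *~ z -> g = sc q f.
Proof.
move=> d0 hq hg.
apply: (mulrz_inj (d := d * denq q)); first by rewrite Num.Theory.mulr_gt0 ?denq_gt0.
rewrite mulrzA hg (mulrC d) [sc q f *~ _]mulrzA sc_den -!mulrzA.
congr (_ *~ _).
apply/eqP; rewrite -(eqr_int rat) !intrM numqE -hq; apply/eqP.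
by rewrite mulrAC.
Qed.

Lemma hom_sumR X Y (f g : Mor X Y) : hom_sum f g (f + g).
Proof. by apply/hom_sumE; rewrite /GRing.add /= addlE. Qed.
Lemma hom_sumR' X Y (f g h : Mor X Y) : hom_sum f g h -> h = f + g.
Proof. by move/hom_sumE => ->; rewrite /GRing.add /= addlE. Qed.

Lemma sc_add X Y a b (f : Mor X Y) : sc (a + b) f = sc a f + sc b f.
Proof.
symmetry; apply: (sc_char (d := denq a * denq b) (z := numq a * denq b + numq b * denq a)).
- by rewrite Num.Theory.mulr_gt0 ?denq_gt0.
- rewrite intrD !intrM mulrDl mulrA -numqE [(denq a)%:~R * _]mulrC mulrA -numqE.
  done.
rewrite mulrzDl (mulrzA (sc a f)) (sc_den a f) -mulrzA (mulrC (denq a)) (mulrzA (sc b f)) (sc_den b f) -(mulrzA f (numq b)).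
by rewrite -mulrzDr.
Qed.

Lemma sc_mul X Y a b (f : Mor X Y) : sc (a * b) f = sc a (sc b f).
Proof.
symmetry; apply: (sc_char (d := denq a * denq b) (z := numq a * numq b)).
- by rewrite Num.Theory.mulr_gt0 ?denq_gt0.
- by rewrite !intrM mulrACA -!numqE.
rewrite (mulrzA (sc a (sc b f))) (sc_den a (sc b f)) -mulrzA (mulrC (numq a)).
by rewrite (mulrzA (sc b f)) (sc_den b f) -mulrzA (mulrC (numq b)).
Qed.

Lemma sc_addf X Y a (f g : Mor X Y) : sc a (f + g) = sc a f + sc a g.
Proof.
symmetry; apply: (sc_char (d := denq a) (z := numq a)).
- exact: denq_gt0.
- by rewrite numqE.
by rewrite mulrzDl (sc_den a f) (sc_den a g) mulrzDl.
Qed.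

Lemma sc_compl X Y Z a (g : Mor Y Z) (f : Mor X Y) : sc a (g ⊙ f) = sc a g ⊙ f.
Proof.
symmetry; apply: (sc_char (d := denq a) (z := numq a)).
- exact: denq_gt0.
- by rewrite numqE.
by rewrite -comp_mulrzl (sc_den a g) comp_mulrzl.
Qed.
Lemma sc_compr X Y Z a (g : Mor Y Z) (f : Mor X Y) : sc a (g ⊙ f) = g ⊙ sc a f.
Proof.
symmetry; apply: (sc_char (d := denq a) (z := numq a)).
- exact: denq_gt0.
- by rewrite numqE.
by rewrite -comp_mulrzr (sc_den a f) comp_mulrzr.
Qed.

Lemma sc1 X Y (f : Mor X Y) : sc 1 f = f.
Proof. by symmetry; apply: (sc_char (d := 1) (z := 1)); rewrite ?mul1r. Qed.

Lemma sc_lin : is_Qlinear sc.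
Proof.
split.
- split; [exact: sc1 | move=> *; exact: sc_mul].
- by move=> X Y a b f; rewrite sc_add; exact: hom_sumR.
- by move=> X Y a f g h /hom_sumR' ->; rewrite sc_addf; exact: hom_sumR.
- split.
  + by move=> X Y Z g f f' h /hom_sumR' ->; rewrite comp_addr; exact: hom_sumR.
  + by move=> X Y Z g g' h f /hom_sumR' ->; rewrite comp_addl; exact: hom_sumR.
- by move=> X Y Z a g f; split; [exact: sc_compl | exact: sc_compr].
Qed.

Lemma sc_uniq (sc' : QAction C) : is_Qlinear sc' ->
  forall (X Y : C) (q : rat) (f : Mor X Y), sc' X Y q f = sc q f.
Proof.
case=> [[H1 H2] H3 _ _ _] X Y q f.
have Hadd : forall (g : Mor X Y) a b, sc' X Y (a + b) g = sc' X Y a g + sc' X Y b g.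
  by move=> g a b; apply: hom_sumR'; apply: H3.
have Hint : forall (g : Mor X Y) (z : int), sc' X Y z%:~R g = g *~ z.
  move=> g z.
  have := @morph_mulrz _ _ (fun r => sc' X Y r g) (fun a b => Hadd g a b) 1 z.
  by rewrite /= H1.
apply: (sc_char (d := denq q) (z := numq q)).
- exact: denq_gt0.
- by rewrite numqE.
by rewrite -Hint -H2 mulrC -numqE Hint.
Qed.

Lemma sc_star X Y q (f : Mor X Y) : star (sc q f) = sc q (star f).
Proof.
apply: (sc_char (d := denq q) (z := numq q)).
- exact: denq_gt0.
- by rewrite numqE.
by rewrite -star_mulrz (sc_den q f) star_mulrz.
Qed.

Lemma main_thm : exists sc : QAction C,
    [/\ is_Qlinear sc,
        (forall sc' : QAction C, is_Qlinear sc' ->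
           forall (X Y : C) (q : rat) (f : Mor X Y), sc' X Y q f = sc X Y q f) &
        (forall (X Y : C) (q : rat) (f : Mor X Y),
           star (sc X Y q f) = sc Y X q (star f))].
Proof.
exists sc; split; [exact: sc_lin | exact: sc_uniq | ].
move=> X Y q f; exact: sc_star.
Qed.

End Main.

Theorem corollary6p7 (C : StarCategory) (HC : is_preHilbert C) :
  exists sc : QAction C,
    [/\ is_Qlinear sc,
        (forall sc' : QAction C, is_Qlinear sc' ->
           forall (X Y : C) (q : rat) (f : Mor X Y), sc' X Y q f = sc X Y q f) &
        (forall (X Y : C) (q : rat) (f : Mor X Y),
           star (sc X Y q f) = sc Y X q (star f))].
Proof. exact: main_thm HC. Qed.
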